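(* Let $(\Omega,\mathcal{A},\mu)$ be a complete $\sigma$-finite measure space, let $E$ be a Köthe function space over $(\Omega,\mathcal{A},\mu)$, and let $X$ be a real Banach space such that the simple functions are dense in the Köthe–Bochner space $E(X)$. If $E(X)$ has the Ball Dentable Property ($BDP$), then $X$ has $BDP$.
   Context: For a real Banach space $X$, $B_X$ denotes its closed unit ball and $X^*$ its dual. A slice of a bounded set $C\subseteq X$ is $S(C,x^*,\alpha)=\{x\in C: x^*(x)>\sup x^*(C)-\alpha\}$ with $x^*\in X^*$, $\|x^*\|=1$, $\alpha>0$. $X$ has the Ball Dentable Property ($BDP$) if for every $\varepsilon>0$ there is a slice of $B_X$ of diameter less than $\varepsilon$. A Köthe function space over a complete $\sigma$-finite measure space $(\Omega,\mathcal{A},\mu)$ is a Banach space $(E,\|\cdot\|_E)$ of real-valued measurable functions on $\Omega$ (modulo equality $\mu$-a.e.) such that: (1) $\chi_A\in E$ for all $A\in\mathcal{A}$ with $\mu(A)<\infty$; (2) every $f\in E$ is $\mu$-integrable over every $A\in\mathcal{A}$ with $\mu(A)<\infty$; (3) if $g$ is measurable, $f\in E$ and $|g|\le|f|$ $\mu$-a.e., then $g\in E$ and $\|g\|_E\le\|f\|_E$. A function $f:\Omega\to X$ is simple if $f=\sum_{i=1}^n x_i\chi_{A_i}$ with $A_i\in\mathcal{A}$ pairwise disjoint, $\mu(A_i)<\infty$, and $x_i\in X\setminus\{0\}$; $f$ is Bochner measurable if it is the $\mu$-a.e. pointwise norm limit of a sequence of simple functions. The Köthe–Bochner space is $E(X)=\{f:\Omega\to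 X \text{ Bochner measurable}: \|f(\cdot)\|\in E\}$ with norm $\|f\|_{E(X)}=\big\|\,\|f(\cdot)\|\,\big\|_E$. *)

(* Defs.v *)
From HB Require Import structures.
From mathcomp Require Import all_boot all_order all_algebra.
From mathcomp Require Import all_classical all_reals all_analysis.
Set Implicit Arguments. Unset Strict Implicit. Unset Printing Implicit Defensive.
Import Order.TTheory GRing.Theory Num.Theory.
Import numFieldNormedType.Exports.
Local Open Scope classical_set_scope.
Local Open Scope ring_scope.

Section Defs.
Context {R : realType}.

(* Ball Dentable Property for a normed space presented as a linear subspace
   [S] of a vector space [V] (elements identified when at distance 0) with a
   seminorm [N].  A slice of the unit ball B = [S ∩ {N <= 1}] is given by a
   linear functional [phi] on S of norm 1 (|phi v| <= N v on S and
   sup phi(B) = 1) and alpha > 0: S(B,phi,alpha) = {v in B : phi v > 1 - alpha}.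
   "diameter < eps" is written as: all distances bounded by some d < eps. *)
Definition BDP_on (V : lmodType R) (S : set V) (N : V -> R) : Prop :=
  forall eps : R, 0 < eps ->
  exists (phi : V -> R) (alpha d : R),
    [/\ (forall a u v, S u -> S v -> phi (a *: u + v) = a * phi u + phi v),
        (forall v, S v -> `|phi v| <= N v),
        (forall delta, 0 < delta -> exists v, [/\ S v, N v <= 1 & 1 - delta < phi v]),
        0 < alpha /\ d < eps &
        (forall u v, S u -> S v -> N u <= 1 -> N v <= 1 ->
           1 - alpha < phi u -> 1 - alpha < phi v -> N (u - v) <= d)].

Definition BDP (X : normedModType R) : Prop :=
  BDP_on (V := X) setT (fun x => `|x|).

Context {d : measure_display} {T : measurableType d}.

(* Köthe function space: E is a set of measurable real functions on T
   (considered modulo mu-a.e. equality) with norm NE. *)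
Record kothe_space (mu : {measure set T -> \bar R})
    (E : set (T -> R)) (NE : (T -> R) -> R) : Prop := {
  kothe_meas : forall f, E f -> measurable_fun setT f;
  kothe_add : forall f g : T -> R, E f -> E g -> E (f \+ g);
  kothe_scale : forall (a : R) f, E f -> E (fun t => a * f t);
  kothe_triangle : forall f g : T -> R, E f -> E g -> NE (f \+ g) <= NE f + NE g;
  kothe_homog : forall (a : R) f, E f -> NE (fun t => a * f t) = `|a| * NE f;
  kothe_def : forall f, E f -> (NE f = 0 <-> {ae mu, forall t, f t = 0});
  kothe_complete : forall u : nat -> T -> R, (forall n, E (u n)) ->
    (forall e, 0 < e -> exists M, forall m n, (M <= m)%N -> (M <= n)%N ->
        NE (u m \- u n) < e) ->
    exists2 f, E f & forall e, 0 < e -> exists M, forall n, (M <= n)%N ->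
        NE (u n \- f) < e;
  kothe_indic : forall A, measurable A -> (mu A < +oo)%E -> E (\1_A);
  kothe_locint : forall f A, E f -> measurable A -> (mu A < +oo)%E ->
    mu.-integrable A (EFin \o f);
  kothe_ideal : forall f g : T -> R, measurable_fun setT g -> E f ->
    {ae mu, forall t, `|g t| <= `|f t|} -> E g /\ NE g <= NE f
}.

Context {X : normedModType R}.

Definition simple_fun (mu : {measure set T -> \bar R}) (f : T -> X) : Prop :=
  exists s : seq (X * set T),
    [/\ (forall p, p \in s -> [/\ measurable p.2, (mu p.2 < +oo)%E & p.1 != 0]),
        (forall i j, (i < size s)%N -> (j < size s)%N -> i <> j ->
            (nth (0, set0) s i).2 `&` (nth (0, set0) s j).2 = set0) &
        f = fun t => \sum_(p <- s) (\1_(p.2) t : R) *: p.1].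

Definition bochner_measurable (mu : {measure set T -> \bar R}) (f : T -> X)
  : Prop :=
  exists s : nat -> T -> X, (forall n, simple_fun mu (s n)) /\
    {ae mu, forall t, (fun n => s n t) @ \oo --> f t}.

Definition KB_space (mu : {measure set T -> \bar R}) (E : set (T -> R))
  : set (T -> X) :=
  [set f | bochner_measurable mu f /\ E (fun t => `|f t|)].

Definition KB_norm (NE : (T -> R) -> R) (f : T -> X) : R :=
  NE (fun t => `|f t|).

End Defs.

(* Main.v *)
Require Import Defs.
From HB Require Import structures.
From mathcomp Require Import all_boot all_order all_algebra.
From mathcomp Require Import all_classical all_reals all_analysis.
Import Order.TTheory GRing.Theory Num.Theory.
Import numFieldNormedType.Exports.
Local Open Scope classical_set_scope.
Local Open Scope ring_scope.
Section Aux.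
Context {R : realType} {T : Type} {X : normedModType R}.

Definition sumf (q : seq (X * set T)) : T -> X :=
  fun t => \sum_(p <- q) (\1_(p.2) t : R) *: p.1.

Fixpoint pdisj (q : seq (X * set T)) : Prop :=
  if q is p :: q' then (forall r, r \in q' -> p.2 `&` r.2 = set0) /\ pdisj q'
  else True.

Definition nthdisj (s : seq (X * set T)) :=
  forall i j, (i < size s)%N -> (j < size s)%N -> i <> j ->
    (nth (0, set0) s i).2 `&` (nth (0, set0) s j).2 = set0.

Lemma pdisjP s : pdisj s <-> nthdisj s.
Proof.
elim: s => [|p s IH] /=.
  by split => // _ i j.
rewrite IH; split.
- move=> [Hp Hs] [|i] [|j] //= Hi Hj Hij.
  + by apply: Hp; exact: mem_nth.
  + by rewrite setIC; apply: Hp; exact: mem_nth.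
  + by apply: Hs => // Hc; apply: Hij; rewrite Hc.
- move=> H; split.
  + move=> r rs; have := H 0%N (index r s).+1 isT; rewrite /= ltnS index_mem.
    by move=> /(_ rs) /(_ ltac:(by [])); rewrite nth_index.
  + move=> i j Hi Hj Hij; apply: (H i.+1 j.+1) => // -[]; exact: Hij.
Qed.
End Aux.
Section Aux2.
Context {R : realType} {d : measure_display} {T : measurableType d} {X : normedModType R}.
Variable mu : {measure set T -> \bar R}.

Lemma setI0S {B A C : set T} : B `&` A = set0 -> C `<=` A -> B `&` C = set0.
Proof.
move=> h CA; apply/seteqP; split=> // t [Bt Ct].
have : (B `&` A) t by split => //; apply: CA.
by rewrite h.
Qed.

Lemma setI0Sl {B A C : set T} : B `&` A = set0 -> C `<=` B -> C `&` A = set0.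
Proof. by move=> h CB; rewrite setIC (setI0S _ CB) // setIC. Qed.

Definition goodp (p : X * set T) := [/\ measurable p.2, (mu p.2 < +oo)%E & p.1 != 0].

Lemma fin_sub {A B : set T} : measurable A -> measurable B -> B `<=` A ->
  (mu A < +oo)%E -> (mu B < +oo)%E.
Proof.
move=> mA mB BA h; apply: le_lt_trans h.
by apply: le_measure => //; rewrite inE.
Qed.

Lemma sumf_cons (p : X * set T) q t : sumf (p :: q) t = (\1_(p.2) t : R) *: p.1 + sumf q t.
Proof. by rewrite /sumf big_cons. Qed.

Lemma sumf_nil (t : T) : sumf (X:=X) [::] t = 0.
Proof. by rewrite /sumf big_nil. Qed.

Lemma addpiece (sq : seq (X * set T)) : pdisj sq -> (forall p, p \in sq -> goodp p) ->
  forall A x, measurable A -> (mu A < +oo)%E ->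
  exists L, [/\ (forall p, p \in L -> goodp p), pdisj L,
     (forall t, sumf L t = (\1_A t : R) *: x + sumf sq t) &
     (forall B, B `&` A = set0 -> (forall r, r \in sq -> B `&` r.2 = set0) ->
        forall r, r \in L -> B `&` r.2 = set0)].
Proof.
elim: sq => [|[y P] sq IH] /=.
  move=> _ _ A x mA fA; have [x0|x0] := eqVneq x 0.
    exists [::]; split => //.
    by move=> t; rewrite sumf_nil x0 scaler0 addr0.
  exists [:: (x, A)]; split => //.
  - by move=> p; rewrite inE => /eqP -> .
  - by move=> t; rewrite sumf_cons !sumf_nil.
  - by move=> B BA _ r; rewrite inE => /eqP ->.
move=> [HP Hsq] Hg A x mA fA.
have [mP fP y0] : goodp (y, P) by apply: Hg; rewrite mem_head.
have Hg' : forall p, p \in sq -> goodp p by move=> p ps; apply: Hg; rewrite in_cons ps orbT.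
have mAP : measurable (A `\` P) by exact: measurableD.
have [L' [HL'g HL'd HL's HL'B]] := IH Hsq Hg' (A `\` P) x mAP (fin_sub mA mAP (@subDsetl _ _ _) fA).
have mPA : measurable (P `&` A) by exact: measurableI.
have mPmA : measurable (P `\` A) by exact: measurableD.
have dPA : forall r, r \in L' -> (P `&` A) `&` r.2 = set0.
  apply: HL'B.
  - by apply/seteqP; split => // t [[Pt _] [_ nPt]]; exact: nPt.
  - by move=> r rs; apply: (setI0Sl (HP r rs)); apply: subIsetl.
have dPmA : forall r, r \in L' -> (P `\` A) `&` r.2 = set0.
  apply: HL'B.
  - by apply/seteqP; split => // t [[Pt _] [_ nPt]]; exact: nPt.
  - by move=> r rs; apply: (setI0Sl (HP r rs)); apply: subDsetl.
set extra := if x + y == 0 then L' else (x + y, P `&` A) :: L'.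
have Hextra_s t : sumf extra t = (\1_(P `&` A) t : R) *: (x + y) + sumf L' t.
  rewrite /extra; case: eqP => [->|_]; first by rewrite scaler0 add0r.
  by rewrite sumf_cons.
have Hextra_in r : r \in extra -> r = (x + y, P `&` A) /\ x + y != 0 \/ r \in L'.
  rewrite /extra; case: eqP => [_|/eqP xy]; first by right.
  by rewrite in_cons => /orP[/eqP ->|]; [left|right].
exists ((y, P `\` A) :: extra); split.
- move=> r; rewrite in_cons => /orP[/eqP ->|/Hextra_in[[-> xy]|/HL'g//]].
    split => //=; exact: (fin_sub mP mPmA (@subDsetl _ _ _) fP).
  split => //=; exact: (fin_sub mP mPA (@subIsetl _ _ _) fP).
- split.
    move=> r /Hextra_in[[-> _]|/dPmA//] /=.
    by apply/seteqP; split => // t [[_ nAt] [_ At]]; exact: nAt.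
  rewrite /extra; case: eqP => _ //=; split => //.
- move=> t; rewrite sumf_cons Hextra_s HL's sumf_cons /=.
  rewrite !indicE !in_setD !in_setI.
  case: (t \in A); case: (t \in P) => /=; rewrite ?scale1r ?scale0r ?add0r ?addr0 //.
  by rewrite addrA.
- move=> B BA BH r; rewrite in_cons => /orP[/eqP ->|/Hextra_in[[-> _]|]] /=.
  + apply: (setI0S (BH (y, P) (mem_head _ _))); exact: subDsetl.
  + apply: (setI0S (BH (y, P) (mem_head _ _))); exact: subIsetl.
  + apply: HL'B => //.
      by apply: (setI0S BA); exact: subDsetl.
    by move=> r' r's; apply: BH; rewrite in_cons r's orbT.
Qed.
End Aux2.
Section Aux3.
Context {R : realType} {d : measure_display} {T : measurableType d} {X : normedModType R}.
Variable mu : {measure set T -> \bar R}.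

Definition goodm (p : X * set T) := measurable p.2 /\ (mu p.2 < +oo)%E.

Lemma gsimple_disj (q : seq (X * set T)) : (forall p, p \in q -> goodm p) ->
  exists L, [/\ (forall p, p \in L -> goodp mu p), pdisj L & forall t, sumf L t = sumf q t].
Proof.
elim: q => [|[x A] q IH] Hq.
  by exists [::]; split.
have [L [HLg HLd HLs]] := IH (fun p pq => Hq p (ltac:(by rewrite in_cons pq orbT))).
have [mA fA] : goodm (x, A) by apply: Hq; rewrite mem_head.
have [L' [H1 H2 H3 _]] := addpiece mu L HLd HLg A x mA fA.
by exists L'; split => // t; rewrite H3 HLs sumf_cons.
Qed.

Lemma gsimple_simple (q : seq (X * set T)) : (forall p, p \in q -> goodm p) ->
  simple_fun mu (sumf q).
Proof.
move=> /gsimple_disj [L [HLg HLd HLs]]; exists L; split.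
- by move=> p /HLg [].
- by apply/pdisjP.
- by apply/funext => t; rewrite -HLs.
Qed.

Lemma simple_bochner (f : T -> X) : simple_fun mu f -> bochner_measurable mu f.
Proof.
move=> hf; exists (fun _ => f); split => //.
by apply: aeW => t; exact: cvg_cst.
Qed.

Lemma sumf_out (L : seq (X * set T)) t : (forall r, r \in L -> ~ r.2 t) -> sumf L t = 0.
Proof.
elim: L => [|r L IH] H; first by rewrite sumf_nil.
rewrite sumf_cons IH; last by move=> r' r'L; apply: H; rewrite in_cons r'L orbT.
rewrite indicE memNset ?scale0r ?addr0 //; apply: H; exact: mem_head.
Qed.

Lemma sumr_out (L : seq (X * set T)) (c : X * set T -> R) t : (forall r, r \in L -> ~ r.2 t) ->
  \sum_(p <- L) (\1_(p.2) t : R) * c p = 0.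
Proof.
elim: L => [|r L IH] H; first by rewrite big_nil.
rewrite big_cons IH; last by move=> r' r'L; apply: H; rewrite in_cons r'L orbT.
rewrite indicE memNset ?mul0r ?addr0 //; apply: H; exact: mem_head.
Qed.

Lemma simple_norm (L : seq (X * set T)) t : pdisj L ->
  `|sumf L t| = \sum_(p <- L) (\1_(p.2) t : R) * `|p.1|.
Proof.
elim: L => [|[y P] L IH] /=; first by rewrite sumf_nil big_nil normr0.
move=> [HP HL]; rewrite sumf_cons big_cons /=.
have [Pt|nPt] := pselect (P t).
  have out : forall r, r \in L -> ~ r.2 t.
    move=> r rL rt; have : (P `&` r.2) t by [].
    by rewrite HP.
  rewrite sumf_out // sumr_out // indicE mem_set // scale1r mul1r !addr0 //.
by rewrite indicE memNset // scale0r mul0r !add0r IH.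
Qed.

Lemma meas_sumr (L : seq (X * set T)) (c : X * set T -> R) :
  (forall p, p \in L -> measurable p.2) ->
  measurable_fun setT (fun t => \sum_(p <- L) (\1_(p.2) t : R) * c p).
Proof.
elim: L => [|r L IH] H.
  by under eq_fun do rewrite big_nil; exact: measurable_cst.
under eq_fun do rewrite big_cons.
apply: measurable_realfun.measurable_funD.
  apply: measurable_realfun.measurable_funM.
    by apply: measurable_realfun.measurable_indic; apply: H; exact: mem_head.
  exact: measurable_cst.
by apply: IH => p pL; apply: H; rewrite in_cons pL orbT.
Qed.

End Aux3.
Section Aux4.
Context {R : realType} {d : measure_display} {T : measurableType d} {X : normedModType R}.
Variable mu : {measure set T -> \bar R}.
Variables (E : set (T -> R)) (NE : (T -> R) -> R).
Hypothesis K : kothe_space mu E NE.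

Lemma fapp (u v : T -> X) (a : R) t : (a *: u + v) t = a *: u t + v t.
Proof. by []. Qed.

Lemma fsub (u v : T -> X) t : (u - v) t = u t - v t.
Proof. by []. Qed.

Lemma E0 : E (fun _ => 0).
Proof.
have h := kothe_scale K 0 (kothe_indic K (@measurable0 _ T) (ltac:(by rewrite measure0))).
suff -> : (fun _ : T => 0 : R) = (fun t => 0 * (\1_set0 t : R)) by [].
by apply/funext => t; rewrite mul0r.
Qed.

Lemma E_sumr (L : seq (X * set T)) (c : X * set T -> R) : (forall p, p \in L -> goodm mu p) ->
  E (fun t => \sum_(p <- L) (\1_(p.2) t : R) * c p).
Proof.
elim: L => [|r L IH] H.
  by under eq_fun do rewrite big_nil; exact: E0.
under eq_fun do rewrite big_cons.
have [mr fr] : goodm mu r by apply: H; exact: mem_head.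
have h1 := kothe_scale K (c r) (kothe_indic K mr fr).
have h2 := IH (fun p pL => H p (ltac:(by rewrite in_cons pL orbT))).
have h3 := kothe_add K h1 h2.
suff <- : ((fun t => c r * (\1_(r.2) t : R)) \+ (fun t => \sum_(p <- L) (\1_(p.2) t : R) * c p)) = 
  (fun t => (\1_(r.2) t : R) * c r + \sum_(p <- L) (\1_(p.2) t : R) * c p) by [].
by apply/funext => t /=; rewrite mulrC.
Qed.

Lemma meas_simple_norm (f : T -> X) : simple_fun mu f -> measurable_fun setT (fun t => `|f t|).
Proof.
move=> [L [HL /pdisjP HLd ->]].
under eq_fun do rewrite (simple_norm _ _ HLd).
by apply: meas_sumr => p /HL [].
Qed.

Lemma Smem (L : seq (X * set T)) : pdisj L -> (forall p, p \in L -> goodm mu p) ->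
  KB_space mu E (sumf L).
Proof.
move=> HLd HL; split.
  by apply: simple_bochner; exact: gsimple_simple.
under eq_fun do rewrite (simple_norm _ _ HLd).
exact: E_sumr.
Qed.

Lemma NE_mono (f g : T -> R) : E f -> measurable_fun setT g -> (forall t, `|g t| <= `|f t|) ->
  E g /\ NE g <= NE f.
Proof. by move=> Ef mg h; exact: (kothe_ideal K mg Ef (@aeW _ _ _ mu _ h)). Qed.

Lemma Phi_sum (Phi : (T -> X) -> R) :
  (forall a u v, KB_space mu E u -> KB_space mu E v -> Phi (a *: u + v) = a * Phi u + Phi v) ->
  forall L, pdisj L -> (forall p, p \in L -> goodm mu p) ->
  Phi (sumf L) = \sum_(p <- L) Phi (sumf [:: p]).
Proof.
move=> lin; elim => [|p L IH] /= HLd HL.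
  have S0 : KB_space mu E (sumf (X:=X) [::]) by apply: Smem.
  have := lin (-1) _ _ S0 S0.
  have -> : (-1) *: sumf (X:=X) [::] + sumf [::] = sumf (T:=T) [::].
    by apply/funext => t; rewrite fapp sumf_nil scaler0 addr0.
  by rewrite mulN1r addNr big_nil.
move: HLd => [Hp HLd].
have Hp1 : KB_space mu E (sumf [:: p]).
  by apply: Smem => // r; rewrite inE => /eqP ->; apply: HL; exact: mem_head.
have HL' : forall r, r \in L -> goodm mu r by move=> r rL; apply: HL; rewrite in_cons rL orbT.
have := lin 1 _ _ Hp1 (Smem L HLd HL').
have -> : 1 *: sumf [:: p] + sumf L = sumf (p :: L).
  by apply/funext => t; rewrite fapp scale1r !sumf_cons sumf_nil addr0.
by move=> ->; rewrite mul1r big_cons IH.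
Qed.

Lemma KB_sub_simple (v s : T -> X) : measure_is_complete mu ->
  KB_space mu E v -> simple_fun mu s -> KB_space mu E s ->
  KB_space mu E (fun t => v t - s t).
Proof.
move=> cmu [[sg [sgs sgc]] Ev] ss [_ Es].
have simple_n : forall n, simple_fun mu (fun t => sg n t - s t).
  move=> n; have [Ln [HLn _ ->]] := sgs n; have [Ls [HLs _ ->]] := ss.
  have := @gsimple_simple _ _ _ _ mu (Ln ++ [seq (- p.1, p.2) | p <- Ls]).
  have -> : sumf (Ln ++ [seq (- p.1, p.2) | p <- Ls]) =
    (fun t => \sum_(p <- Ln) (\1_(p.2) t : R) *: p.1 - \sum_(p <- Ls) (\1_(p.2) t : R) *: p.1).
    apply/funext => t; rewrite /sumf big_cat /= big_map.
    by rewrite -sumrN; congr (_ + _); apply: eq_bigr => p _; rewrite scalerN.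
  apply; move=> p; rewrite mem_cat => /orP[/HLn[]//|/mapP[q /HLs[mq fq _] ->]].
  by split.
split.
  exists (fun n t => sg n t - s t); split => //.
  apply: filterS sgc => t ht; apply: cvgB => //; exact: cvg_cst.
set g := fun t => `|v t - s t|.
have mg : measurable_fun setT g.
  set D := [set t | (fun n => sg n t) @ \oo --> v t].
  have nD : mu.-negligible (~` D) by exact: sgc.
  have mD : measurable D by rewrite -[D]setCK; apply: measurableC; exact: cmu.
  have mgD : measurable_fun D g.
    apply: (measurable_realfun.measurable_fun_cvg (h := fun n t => `|sg n t - s t|)).
      move=> n; apply: (measurable_funS _ (@subsetT _ D)) => //.
      exact: meas_simple_norm.
    move=> t Dt; apply: cvg_norm; apply: cvgB => //; exact: cvg_cst.
  move=> _ Y mY; rewrite setTI.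
  have -> : g @^-1` Y = (D `&` g @^-1` Y) `|` (~` D `&` g @^-1` Y).
    apply/seteqP; split => t.
      by move=> gt; have [Dt|nDt] := pselect (D t); [left|right].
    by move=> [[]|[]].
  apply: measurableU; first exact: mgD.
  by apply: cmu; apply: negligibleS nD; exact: subIsetl.
have Evs := kothe_add K Ev Es.
have [] := NE_mono _ _ Evs mg.
  move=> t; rewrite /g /= normr_id ger0_norm; first exact: ler_normB.
  exact: addr_ge0.
by [].
Qed.

End Aux4.
From mathcomp Require Import lra ring.

Section ClaimW.
Context {R : realType} {X : normedModType R}.

Lemma lin0 {psi : X -> R} : (forall a u v, psi (a *: u + v) = a * psi u + psi v) -> psi 0 = 0.
Proof.
move=> lin; have := lin (-1) 0 0; rewrite scaler0 addr0 => h.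
by move: h; rewrite mulN1r addNr.
Qed.

Lemma linZ {psi : X -> R} : (forall a u v, psi (a *: u + v) = a * psi u + psi v) ->
  forall a u, psi (a *: u) = a * psi u.
Proof.
move=> lin a u; have := lin a u 0; rewrite addr0 => ->.
by rewrite (lin0 lin) addr0.
Qed.

Lemma lin_bound {psi : X -> R} {M} : (forall a u v, psi (a *: u + v) = a * psi u + psi v) ->
  (forall y, `|y| <= 1 -> psi y <= M) -> forall y, psi y <= M * `|y|.
Proof.
move=> lin ub y; have [->|y0] := eqVneq y 0.
  by rewrite (lin0 lin) normr0 mulr0.
have ny : 0 < `|y| by rewrite normr_gt0.
have := ub (`|y|^-1 *: y); rewrite normrZ normfV normr_id mulVf ?gt_eqF // lexx.
move=> /(_ isT); rewrite (linZ lin) => h.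
by rewrite -ler_pdivrMr // mulrC.
Qed.

Lemma claimW (eps : R) : 0 < eps -> eps <= 1 ->
  (forall (phi : X -> R) (alpha dd : R),
     (forall a u v, phi (a *: u + v) = a * phi u + phi v) ->
     (forall v, `|phi v| <= `|v|) ->
     (forall delta : R, 0 < delta -> exists v : X, `|v| <= 1 /\ 1 - delta < phi v) ->
     0 < alpha -> dd <= eps / 2 ->
     exists u v : X, [/\ `|u| <= 1, `|v| <= 1, 1 - alpha < phi u, 1 - alpha < phi v & dd < `|u - v|]) ->
  forall (psi : X -> R) (M : R) (x0 : X) (beta : R),
  (forall a u v, psi (a *: u + v) = a * psi u + psi v) ->
  (forall y, `|y| <= 1 -> psi y <= M) ->
  (forall delta : R, 0 < delta -> exists y : X, `|y| <= 1 /\ M - delta < psi y) ->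
  x0 != 0 -> 0 < beta ->
  exists u v : X, [/\ `|u| <= 1, `|v| <= 1, M - beta < psi u, M - beta < psi v & eps / 2 < `|u - v|].
Proof.
move=> e0 e1 H psi M x0 beta lin ub adh x00 b0.
have M0 : 0 <= M by rewrite -(lin0 lin); apply: ub; rewrite normr0.
have [Mp|M0'] := ltrP 0 M; last first.
  have MM : M = 0 by apply/le_anti; rewrite M0 M0'.
  have nx : 0 < `|x0| by rewrite normr_gt0.
  set u := `|x0|^-1 *: x0.
  have nu : `|u| = 1 by rewrite normrZ normfV normr_id mulVf ?gt_eqF.
  have pu : psi u = 0.
    apply/le_anti; rewrite -MM ub ?nu //=.
    have := ub (-1 *: u); rewrite normrZ normrN1 mul1r nu lexx (linZ lin) MM => /(_ isT).
    by rewrite mulN1r oppr_le0.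
  exists u, (- u); split.
  - by rewrite nu.
  - by rewrite normrN nu.
  - by rewrite pu MM sub0r oppr_lt0.
  - by rewrite -[- u]scaleN1r (linZ lin) pu mulr0 MM sub0r oppr_lt0.
  - rewrite opprK; have -> : u + u = (2 : R) *: u by rewrite scaler_nat mulr2n.
    rewrite normrZ nu mulr1 normr_nat.
    by apply: (@le_lt_trans _ _ (1 / 2)); [rewrite ler_pM2r // | lra].
have bnd : forall y, `|psi y| <= M * `|y|.
  move=> y; rewrite ler_norml (lin_bound lin ub) andbT.
  have := lin_bound lin ub (-1 *: y); rewrite (linZ lin) normrZ normrN1 mul1r.
  by rewrite mulN1r lerNl.
have := H (fun y => psi y / M) (beta / M) (eps / 2).
case.
- by move=> a u v /=; rewrite lin mulrDl mulrA.
- move=> v /=; rewrite normrM normfV (gtr0_norm Mp) ler_pdivrMr // mulrC; exact: bnd.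
- move=> delta d0; have [y [ny hy]] := adh (delta * M) (mulr_gt0 d0 Mp).
  exists y; split => //; rewrite ltr_pdivlMr // mulrBl mul1r; exact: hy.
- exact: divr_gt0.
- by [].
move=> u [v [nu nv pu pv duv]].
exists u, v; split => //.
- by move: pu; rewrite ltr_pdivlMr // mulrBl mul1r divfK ?gt_eqF.
- by move: pv; rewrite ltr_pdivlMr // mulrBl mul1r divfK ?gt_eqF.
Qed.
End ClaimW.
Lemma pdisj_map {R : realType} {T : Type} {X : normedModType R} (F : X * set T -> X) (L : seq (X * set T)) :
  pdisj L -> pdisj [seq (F p, p.2) | p <- L].
Proof.
elim: L => [|p L IH] //= [Hp HL]; split; last exact: IH.
by move=> r /mapP[q qL ->] /=; apply: Hp.
Qed.

Lemma sumf_map {R : realType} {T : Type} {X : normedModType R} (F : X * set T -> X) (L : seq (X * set T)) t :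
  sumf [seq (F p, p.2) | p <- L] t = \sum_(p <- L) (\1_(p.2) t : R) *: F p.
Proof. by rewrite /sumf big_map. Qed.

Theorem mainTheorem5 (R : realType) (d : measure_display) (T : measurableType d)
    (mu : {measure set T -> \bar R}) (E : set (T -> R)) (NE : (T -> R) -> R)
    (X : completeNormedModType R) :
  measure_is_complete mu ->
  sigma_finite setT mu ->
  kothe_space mu E NE ->
  (* simple functions are dense in E(X) *)
  (forall f : T -> X, KB_space mu E f -> forall eps : R, 0 < eps ->
     exists s : T -> X,
       [/\ simple_fun mu s, KB_space mu E s & KB_norm NE (f \- s) < eps]) ->
  BDP_on (V := T -> X) (KB_space mu E) (KB_norm NE) ->
  BDP X.
Proof.
move=> cmu _ K dens BE; apply: contrapT => nB.
have [eps0 [e00 He0]] : exists eps0 : R, 0 < eps0 /\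
  forall (phi : X -> R) (alpha dd : R),
     (forall a u v, phi (a *: u + v) = a * phi u + phi v) ->
     (forall v, `|phi v| <= `|v|) ->
     (forall delta : R, 0 < delta -> exists v : X, `|v| <= 1 /\ 1 - delta < phi v) ->
     0 < alpha -> dd < eps0 ->
     exists u v : X, [/\ `|u| <= 1, `|v| <= 1, 1 - alpha < phi u, 1 - alpha < phi v & dd < `|u - v|].
  apply: contrapT => h; apply: nB => e e0; apply: contrapT => h2; apply: h.
  exists e; split => // phi alpha dd lin bnd sup a0 dde; apply: contrapT => h3; apply: h2.
  exists phi, alpha, dd; split.
  - by move=> a u v _ _; exact: lin.
  - by move=> v _; exact: bnd.
  - by move=> delta /sup [v [? ?]]; exists v; split.
  - by split.
  - move=> u v _ _ nu nv pu pv; rewrite leNgt; apply/negP => c; apply: h3.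
    by exists u, v; split.
set eps := Num.min eps0 1.
have e0 : 0 < eps by rewrite lt_min e00 ltr01.
have e1 : eps <= 1 by rewrite ge_min lexx orbT.
have ee0 : eps <= eps0 by rewrite ge_min lexx.
have he : eps / 2 < eps0 by lra.
have W := @claimW R X eps e0 e1 (fun phi alpha dd l b s a0 h =>
  He0 phi alpha dd l b s a0 (le_lt_trans h he)).
clear He0 nB.
have [Phi [alpha [dd [lin bnd supP [al0 dde] diam]]]] := BE (eps / 8) (ltac:(lra)).
set a := Num.min alpha 1.
have a0 : 0 < a by rewrite lt_min al0 ltr01.
have a1 : a <= 1 by rewrite ge_min lexx orbT.
have aal : a <= alpha by rewrite ge_min lexx.
have [v [Sv Nv Pv]] := supP (a / 4) (ltac:(lra)).
have [s [ss Ss Nvs]] := dens v Sv (a / 4) (ltac:(lra)).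
have Svs := @KB_sub_simple _ _ _ _ mu E NE K v s cmu Sv ss Ss.
have Nvs' : KB_norm NE (fun t => v t - s t) < a / 4 := Nvs.
have Phis : 1 - a / 2 < Phi s.
  have e := lin (-1) s v Ss Sv.
  have ee : (-1) *: s + v = (fun t => v t - s t).
    by apply/funext => t; rewrite fapp scaleN1r addrC.
  rewrite ee in e.
  have := le_lt_trans (bnd _ Svs) Nvs'.
  rewrite e ltr_norml => /andP[h1 h2]; lra.
have Ns : KB_norm NE s <= 1 + a / 4.
  have Ev : E (fun t => `|v t|) by case: Sv.
  have Evs : E (fun t => `|v t - s t|) by case: Svs.
  have hb : forall t, `|(`|s t|)| <= `|(((fun t => `|v t|) \+ (fun t => `|v t - s t|)) t)|.
    move=> t /=; rewrite normr_id ger0_norm ?addr_ge0 //.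
    by rewrite -{1}(subKr (v t) (s t)) ler_normB.
  have [_ h] := @NE_mono _ _ _ mu E NE K _ (fun t => `|s t|) (kothe_add K Ev Evs)
    (kothe_meas K (proj2 Ss)) hb.
  have := le_trans h (kothe_triangle K Ev Evs).
  rewrite /KB_norm in Nv Nvs' *; lra.
have [L [HLg /pdisjP pdL sL]] := ss.
have sL' : s = sumf L := sL.
have gmL : forall p, p \in L -> goodm mu p by move=> p /HLg [].
have S1 : forall (x : X) (A : set T), measurable A -> (mu A < +oo)%E -> KB_space mu E (sumf [:: (x, A)]).
  move=> x A mA fA; apply: (@Smem _ _ _ _ mu E NE K [:: (x, A)]) => //.
  by move=> r; rewrite inE => /eqP ->.
have norm1 : forall (x : X) (A : set T) t, `|sumf [:: (x, A)] t| = (\1_A t : R) * `|x|.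
  by move=> x A t; rewrite (simple_norm _ _ (ltac:(by []) : pdisj [:: (x, A)])) big_cons big_nil addr0.
set psi := fun (p : X * set T) (y : X) => Phi (sumf [:: (`|p.1| *: y, p.2)]).
have lin_psi : forall p, p \in L -> forall a u w, psi p (a *: u + w) = a * psi p u + psi p w.
  move=> [x A] /gmL [mA fA] b u w; rewrite /psi /=.
  have -> : sumf [:: (`|x| *: (b *: u + w), A)] =
      b *: sumf [:: (`|x| *: u, A)] + sumf [:: (`|x| *: w, A)].
    apply/funext => t; rewrite fapp !sumf_cons !sumf_nil !addr0 !scalerDr.
    by rewrite /=; congr (_ + _); rewrite !scalerA [X in X *: u = _]mulrC mulrA.
  by rewrite lin //; apply: S1.
set M := fun p => sup (fun r => exists y : X, `|y| <= 1 /\ psi p y = r).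
have hsM : forall p, p \in L -> has_sup (fun r => exists y : X, `|y| <= 1 /\ psi p y = r).
  move=> [x A] pL; have [mA fA] := gmL _ pL; split.
    by exists (psi (x, A) 0), 0; rewrite normr0.
  exists (KB_norm NE (sumf [:: (x, A)])) => _ [y [ny <-]].
  rewrite /psi /=.
  apply: le_trans (ler_norm _) _; apply: le_trans (bnd _ (S1 _ _ mA fA)) _.
  apply: (proj2 (@NE_mono _ _ _ mu E NE K (fun t => `|sumf [:: (x, A)] t|)
     (fun t => `|sumf [:: (`|x| *: y, A)] t|) (proj2 (S1 _ _ mA fA))
     (kothe_meas K (proj2 (S1 _ _ mA fA))) _)) => t; rewrite !normr_id !norm1 normrZ normr_id.
  by rewrite ler_wpM2l // ?indicE ?ler0n // ler_piMr.
have ubM : forall p, p \in L -> forall y, `|y| <= 1 -> psi p y <= M p.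
  by move=> p pL y ny; apply: sup_upper_bound (hsM p pL) _ _; exists y.
have adhM : forall p, p \in L -> forall delta : R, 0 < delta ->
    exists y : X, `|y| <= 1 /\ M p - delta < psi p y.
  move=> p pL delta dl; have [_ [y [ny <-]] h] := sup_adherent dl (hsM p pL).
  by exists y.
have Mge : forall p, p \in L -> Phi (sumf [:: p]) <= M p.
  move=> [x A] pL; have [_ _ x0] := HLg _ pL.
  have := ubM _ pL (`|x|^-1 *: x).
  rewrite /psi /= scalerA mulfV ?normr_eq0 // scale1r; apply.
  by rewrite normrZ normfV normr_id mulVf ?normr_eq0.
set n := size L.
set beta := a / (4 * n.+1%:R).
have b0 : 0 < beta by apply: divr_gt0 => //; apply: mulr_gt0 => //; rewrite ltr0n.
have hZ : forall p, exists uv : X * X, p \in L -> [/\ `|uv.1| <= 1, `|uv.2| <= 1,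
    M p - beta < psi p uv.1, M p - beta < psi p uv.2 & eps / 2 < `|uv.1 - uv.2|].
  move=> p; case: (boolP (p \in L)) => pL; last by exists (0, 0).
  have [_ _ x0] := HLg _ pL.
  have [u [w [nu nw pu pw uw]]] := W (psi p) (M p) p.1 beta (lin_psi p pL) (ubM p pL) (adhM p pL) x0 b0.
  by exists (u, w).
have [Z HZ] := choice hZ.
have sum_const : forall (r : seq (X * set T)) (b : R), \sum_(p <- r) b = (size r)%:R * b.
  by move=> r b; elim: r => [|x r IH]; rewrite ?big_nil ?mul0r // big_cons IH /= -natr1 mulrDl mul1r addrC.
have nb : n%:R * beta <= a / 4.
  rewrite /beta mulrA ler_pdivrMr; last by apply: mulr_gt0 => //; rewrite ltr0n.
  rewrite -[n.+1%:R]natr1 mulrA divfK ?pnatr_eq0 // mulrDr mulr1 mulrC lerDl; exact: ltW.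
set c := (1 + a / 4)^-1.
have c0 : 0 < c by rewrite invr_gt0; lra.
have cN : c * (1 + a / 4) = 1 by rewrite mulVf //; apply: lt0r_neq0; lra.
have Ls : forall (F : X * set T -> X), pdisj [seq (F p, p.2) | p <- L] /\
    (forall p, p \in [seq (F p, p.2) | p <- L] -> goodm mu p).
  move=> F; split; first exact: pdisj_map.
  by move=> _ /mapP[p pL ->]; have [? ?] := gmL p pL; split.
have normL : forall (F : X * set T -> X) t,
    `|sumf [seq (F p, p.2) | p <- L] t| = \sum_(p <- L) (\1_(p.2) t : R) * `|F p|.
  by move=> F t; rewrite (simple_norm _ _ (proj1 (Ls F))) big_map.
have Ens : E (fun t => `|s t|) by case: Ss.
have gen : forall zf : X * set T -> X,
    (forall p, p \in L -> `|zf p| <= 1 /\ M p - beta < psi p (zf p)) ->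
    [/\ KB_space mu E (sumf [seq ((c * `|p.1|) *: zf p, p.2) | p <- L]),
        KB_norm NE (sumf [seq ((c * `|p.1|) *: zf p, p.2) | p <- L]) <= 1 &
        1 - alpha < Phi (sumf [seq ((c * `|p.1|) *: zf p, p.2) | p <- L])].
  move=> zf hz.
  have [pd gd] := Ls (fun p => (c * `|p.1|) *: zf p).
  have Sg := @Smem _ _ _ _ mu E NE K _ pd gd.
  split => //.
  - have Ecs := kothe_scale K c Ens.
    have hb : forall t, `|(`|sumf [seq ((c * `|p.1|) *: zf p, p.2) | p <- L] t|)| <= `|(c * `|s t|)|.
      move=> t; rewrite normr_id normL (ger0_norm (mulr_ge0 (ltW c0) (normr_ge0 _))).
      rewrite sL' (simple_norm _ _ pdL) mulr_sumr big_seq [X in _ <= X]big_seq.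
      apply: ler_sum => p pL; rewrite normrZ normrM (gtr0_norm c0) normr_id [X in _ <= X]mulrCA.
      rewrite ler_wpM2l ?indicE ?ler0n //; apply: ler_piMr.
        by rewrite mulr_ge0 // ltW.
      exact: (proj1 (hz p pL)).
    have [_ h] := @NE_mono _ _ _ mu E NE K _ _ Ecs (kothe_meas K (proj2 Sg)) hb.
    apply: le_trans h _; rewrite (kothe_homog K c Ens) (gtr0_norm c0).
    rewrite -cN; apply: ler_wpM2l; first exact: ltW.
    exact: Ns.
  - rewrite (@Phi_sum _ _ _ _ mu E NE K Phi lin _ pd gd) big_map.
    have f1 : \sum_(p <- L) Phi (sumf [:: ((c * `|p.1|) *: zf p, p.2)]) =
        \sum_(p <- L) c * psi p (zf p).
      rewrite big_seq [RHS]big_seq; apply: eq_bigr => p pL.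
      rewrite -(linZ (lin_psi p pL)) /psi /= scalerA mulrC //.
    rewrite f1 -mulr_sumr.
    have f2 : \sum_(p <- L) Phi (sumf [:: p]) - n%:R * beta <= \sum_(p <- L) psi p (zf p).
      rewrite -sum_const -sumrB big_seq [X in _ <= X]big_seq; apply: ler_sum => p pL.
      rewrite lerBlDr; apply: ltW; rewrite -ltrBlDr.
      exact: le_lt_trans (lerB (Mge p pL) (lexx _)) (proj2 (hz p pL)).
    rewrite -(@Phi_sum _ _ _ _ mu E NE K Phi lin _ pdL gmL) -sL' in f2.
    have hX : 1 - 3 * a / 4 < \sum_(p <- L) psi p (zf p) by lra.
    move: hX; set Y := \sum_(p <- L) psi p (zf p) => hX.
    rewrite /c mulrC -/(Y / (1 + a / 4)) ltr_pdivlMr; last by lra.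
    nra.
have [Sg1 Ng1 Pg1] := gen (fun p => (Z p).1)
  (fun p pL => let: And5 h1 _ h3 _ _ := HZ p pL in conj h1 h3).
have [Sg2 Ng2 Pg2] := gen (fun p => (Z p).2)
  (fun p pL => let: And5 _ h2 _ h4 _ := HZ p pL in conj h2 h4).
set g1 := sumf [seq ((c * `|p.1|) *: (Z p).1, p.2) | p <- L] in Sg1 Ng1 Pg1.
set g2 := sumf [seq ((c * `|p.1|) *: (Z p).2, p.2) | p <- L] in Sg2 Ng2 Pg2.
have Dg := diam g1 g2 Sg1 Sg2 Ng1 Ng2 Pg1 Pg2.
set F12 := fun p : X * set T => (c * `|p.1|) *: ((Z p).1 - (Z p).2).
have g12 : (fun t => `|(g1 - g2) t|) = (fun t => `|sumf [seq (F12 p, p.2) | p <- L] t|).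
  apply/funext => t; congr `|_|.
  rewrite /g1 /g2 /F12 fsub !sumf_map -sumrB; apply: eq_bigr => p _.
  by rewrite scalerBr scalerBr.
have [pd12 gd12] := Ls F12.
have S12 := @Smem _ _ _ _ mu E NE K _ pd12 gd12.
have Ecs := kothe_scale K (eps / 2 * c) Ens.
have hb : forall t, `|(eps / 2 * c * `|s t|)| <= `|(`|sumf [seq (F12 p, p.2) | p <- L] t|)|.
  move=> t; rewrite normr_id normL (ger0_norm _); last first.
    by rewrite mulr_ge0 // mulr_ge0 // ?ltW //; lra.
  rewrite sL' (simple_norm _ _ pdL) mulr_sumr big_seq [X in _ <= X]big_seq.
  apply: ler_sum => p pL; rewrite /F12 normrZ normrM (gtr0_norm c0) normr_id mulrCA.
  rewrite ler_wpM2l ?indicE ?ler0n //.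
  have -> : eps / 2 * c * `|p.1| = eps / 2 * (c * `|p.1|) by rewrite mulrA.
  have hz : eps / 2 <= `|(Z p).1 - (Z p).2| by case: (HZ p pL) => _ _ _ _ /ltW.
  have hw : 0 <= c * `|p.1| by rewrite mulr_ge0 // ltW.
  move: hz hw; set w := c * `|p.1|; set z := `|(Z p).1 - (Z p).2|; move=> hz hw.
  rewrite (mulrC w); apply: ler_pM => //; lra.
have [_ h] := @NE_mono _ _ _ mu E NE K _ _ (proj2 S12) (kothe_meas K Ecs) hb.
move: Dg; rewrite /KB_norm g12 => Dg.
have h2 := le_trans h Dg.
rewrite (kothe_homog K (eps / 2 * c) Ens) ger0_norm in h2; last first.
  by rewrite mulr_ge0 // ?ltW //; lra.
have Nsp : 1 - a / 2 < NE (fun t => `|s t|).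
  by apply: lt_le_trans Phis _; apply: le_trans (ler_norm _) (bnd _ Ss).
have c45 : 1 / 4 <= c * NE (fun t => `|s t|).
  rewrite /c [X in _ <= X]mulrC ler_pdivlMr; last by lra.
  lra.
have h3 : eps / 2 * (1 / 4) <= eps / 2 * c * NE (fun t => `|s t|).
  rewrite (_ : eps / 2 * c * NE _ = eps / 2 * (c * NE (fun t => `|s t|))); last by rewrite mulrA.
  by apply: ler_pM => //; lra.
lra.
Qed.
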